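(* Let $S$ be the three-vertex tree with root $a$, whose right child is $b$, where $b$ has a left child $c$ (preorder $132$), and let $S'$ be the three-vertex tree with a root having both a left child and a right child (preorder $213$); all edges of $S$ and $S'$ are contiguous. Let $(P,e)$ be any tree pattern. Let $Q$ be obtained from $S$ by attaching $(P,e)$ as the left subtree of the root $a$ via a non-contiguous edge, and let $Q'$ be obtained from $S'$ by attaching $(P,e)$ as the left subtree of the right leaf of $S'$ via a non-contiguous edge. Then $Q$ and $Q'$ are Wilf-equivalent.
   Context: $\mathcal{T}_n$ is the set of binary trees on $n$ vertices labeled $1,\dots,n$ by the search tree property (labels of combined trees reassigned by this property). $c_L,c_R,p$: left child, right child, parent. A tree pattern is $(P,e)$, $P\in\mathcal{T}_k$, $e\colon[k]\setminus\{\text{root}\}\to\{0,1\}$; edge $(i,p(i))$ is contiguous if $e(i)=1$, non-contiguous if $e(i)=0$. $T\in\mathcal{T}_n$ contains $(P,e)$ if there is an injection $f\colon[k]\to[n]$ such that for every non-root $i$ of $P$: if $e(i)=1$, $f(i)$ is the left (resp. right) child of $f(p(i))$ when $i$ is the left (resp. right) child of $p(i)$; if $e(i)=0$, $f(i)$ lies in the left (resp. right) subtree of $f(p(i))$. $\mathcal{T}_n(Q)$ is the set of avoiders of $Q$. $Q,Q'$ are Wilf-equivalent if $|\mathcal{T}_n(Q)|=|\mathcal{T}_n(Q')|$ for all $n\ge0$. *)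

(* Defs.v *)
From mathcomp Require Import all_boot.
From mathcomp Require Import boolp.

Set Implicit Arguments.
Unset Strict Implicit.
Unset Printing Implicit Defensive.

(* A tree with n vertices carries a unique labeling
   by 1..n satisfying the search-tree property (in-order), so T_n is in
   bijection with the shapes of size n.  Vertices are addressed by their path
   from the root: a seq bool, false = go to left child, true = right child. *)
Inductive btree := BLeaf | BNode of btree & btree.

Fixpoint bsize (t : btree) : nat :=
  if t is BNode l r then (bsize l + bsize r).+1 else 0.

Fixpoint bpos (t : btree) (p : seq bool) : bool :=
  match t, p with
  | BLeaf, _ => false
  | BNode _ _, [::] => true
  | BNode l _, false :: q => bpos l q
  | BNode _ r, true :: q => bpos r q
  end.

(* Tree patterns: each vertex carries the bit e of the edge to its parent
   (true = contiguous, false = non-contiguous); the bit at the root is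
   irrelevant. *)
Inductive ptree := PLeaf | PNode of bool & ptree & ptree.

Fixpoint psub (P : ptree) (p : seq bool) : ptree :=
  match p, P with
  | [::], _ => P
  | _, PLeaf => PLeaf
  | false :: q, PNode _ l _ => psub l q
  | true :: q, PNode _ _ r => psub r q
  end.

Definition ppos (P : ptree) (p : seq bool) : bool :=
  if psub P p is PNode _ _ _ then true else false.

Definition pedge (P : ptree) (p : seq bool) : bool :=
  if psub P p is PNode e _ _ then e else false.

Definition contains (P : ptree) (T : btree) : Prop :=
  exists f : seq bool -> seq bool,
    [/\ (forall p, ppos P p -> bpos T (f p)),
        (forall p q, ppos P p -> ppos P q -> f p = f q -> p = q) &
        (forall p d, ppos P (rcons p d) ->
           (pedge P (rcons p d) -> f (rcons p d) = rcons (f p) d) /\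
           (~~ pedge P (rcons p d) -> exists s, f (rcons p d) = f p ++ d :: s))].

(* All trees of height <= h, each exactly once. *)
Fixpoint trees_upto (h : nat) : seq btree :=
  if h is h'.+1 then
    BLeaf :: [seq BNode lr.1 lr.2 | lr <- [seq (l, r) | l <- trees_upto h', r <- trees_upto h']]
  else [:: BLeaf].

(* |T_n(Q)| : trees of size n (all have height <= n) avoiding Q. *)
Definition num_avoiders (Q : ptree) (n : nat) : nat :=
  count (fun t => (bsize t == n) && `[< ~ contains Q t >]) (trees_upto n).

Definition wilf_equiv (Q Q' : ptree) : Prop :=
  forall n, num_avoiders Q n = num_avoiders Q' n.

(* (P,e) with the edge from its root to the new parent made non-contiguous *)
Definition attach_nc (P : ptree) : ptree :=
  if P is PNode _ l r then PNode false l r else PLeaf.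

(* Q : S = root a, right child b (contiguous), b has left child c
   (contiguous) [preorder 132]; (P,e) attached as left subtree of a,
   non-contiguously. *)
Definition Q132 (P : ptree) : ptree :=
  PNode false (attach_nc P) (PNode true (PNode true PLeaf PLeaf) PLeaf).

(* Q' : S' = root with left and right leaf children (contiguous)
   [preorder 213]; (P,e) attached as left subtree of the right leaf,
   non-contiguously. *)
Definition Q213 (P : ptree) : ptree :=
  PNode false (PNode true PLeaf PLeaf) (PNode true (attach_nc P) PLeaf).

(* Main.v *)
From HB Require Import structures.
Require Import Defs.
From mathcomp Require Import all_boot.
From mathcomp Require Import all_algebra.
From mathcomp Require Import boolp.
From mathcomp Require Import ring zify.

Set Implicit Arguments.
Unset Strict Implicit.
Unset Printing Implicit Defensive.
Import GRing.Theory.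


Definition occF (m : btree -> bool) : btree -> bool :=
  fix occ t := m t || (if t is BNode a b then occ a || occ b else false).

Fixpoint mat (P : ptree) (T : btree) {struct P} : bool :=
  match P with
  | PLeaf => true
  | PNode _ l r =>
    match T with
    | BLeaf => false
    | BNode tl tr =>
      (match l with PLeaf => true | PNode e _ _ => if e then mat l tl else occF (mat l) tl end) &&
      (match r with PLeaf => true | PNode e _ _ => if e then mat r tr else occF (mat r) tr end)
    end
  end.

Definition occ P := occF (mat P).

Definition emb (P : ptree) (T : btree) (f : seq bool -> seq bool) : Prop :=
  [/\ (forall p, ppos P p -> bpos T (f p)),
      (forall p q, ppos P p -> ppos P q -> f p = f q -> p = q) &
      (forall p d, ppos P (rcons p d) ->
         (pedge P (rcons p d) -> f (rcons p d) = rcons (f p) d) /\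
         (~~ pedge P (rcons p d) -> exists s, f (rcons p d) = f p ++ d :: s))].

Fixpoint bsubt (T : btree) (p : seq bool) {struct p} : btree :=
  match p, T with
  | [::], _ => T
  | _, BLeaf => BLeaf
  | false :: q, BNode l _ => bsubt l q
  | true :: q, BNode _ r => bsubt r q
  end.

Definition isnode T := if T is BNode _ _ then true else false.

Lemma bpos_bsubt T p : bpos T p = isnode (bsubt T p).
Proof. by elim: p T => [|[] p IH] [|l r] //=. Qed.

Lemma bsubt_cat T a b : bsubt T (a ++ b) = bsubt (bsubt T a) b.
Proof.
have L : forall q, bsubt BLeaf q = BLeaf by move=> [|[] q].
elim: a T => [|x a IH] T //=.
case: x; case: T => //= *; by rewrite L.
Qed.

Lemma ppos_leaf q : ppos PLeaf q = false.
Proof. by case: q => [|[] q]. Qed.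

Lemma emb_shift P tl tr f (b : bool) :
  emb P (if b then tr else tl) f -> emb P (BNode tl tr) (fun p => b :: f p).
Proof.
case: b => -[H1 H2 H3]; split.
- by move=> p /H1.
- by move=> p q Hp Hq [] /H2; apply.
- move=> p d /H3 [E1 E2]; split.
  + by move=> /E1 ->.
  + by move=> /E2 [s ->]; exists s.
- by move=> p /H1.
- by move=> p q Hp Hq [] /H2; apply.
- move=> p d /H3 [E1 E2]; split.
  + by move=> /E1 ->.
  + by move=> /E2 [s ->]; exists s.
Qed.

Lemma occ_emb P T :
  (forall t, mat P t -> exists f, emb P t f) -> occF (mat P) T -> exists f, emb P T f.
Proof.
move=> H; elim: T => [|tl IHl tr IHr] /=.
  by rewrite orbF => /H.
case/orP => [/H //|/orP [/IHl [f Hf]|/IHr [f Hf]]].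
  by exists (fun p => false :: f p); apply: (emb_shift (b:=false)).
by exists (fun p => true :: f p); apply: (emb_shift (b:=true)).
Qed.

Lemma rcons_cons (b : bool) p d : rcons (b :: p) d = b :: rcons p d.
Proof. by []. Qed.

Lemma mat_emb P T : mat P T -> exists f, emb P T f /\ f [::] = [::].
Proof.
elim: P T => [|e l IHl r IHr] T.
  move=> _; exists id; split => //; split => p; rewrite ?ppos_leaf //.
  by move=> d; rewrite ppos_leaf.
case: T => [|tl tr] //= /andP [Hl Hr].
have child : forall c t, (forall T, mat c T -> exists f, emb c T f /\ f [::] = [::]) ->
   (match c with PLeaf => true | PNode e _ _ => if e then mat c t else occF (mat c) t end) ->
   exists g, emb c t g /\ (pedge c [::] -> g [::] = [::]).
  move=> [|ec cl cr] t IH.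
    move=> _; exists id; split => //; split => p; rewrite ?ppos_leaf //.
    by move=> d; rewrite ppos_leaf.
  case: ec IH => IH.
    by move=> /IH [g [Hg1 Hg2]]; exists g.
  move=> /(occ_emb (P := PNode false cl cr)) [].
    by move=> t' /IH [g [Hg _]]; exists g.
  by move=> g Hg; exists g.
have [gl [[Hl1 Hl2 Hl3] Hl0]] := child l tl IHl Hl.
have [gr [[Hr1 Hr2 Hr3] Hr0]] := child r tr IHr Hr.
exists (fun p => match p with [::] => [::] | b :: q => b :: (if b then gr q else gl q) end).
split => //; split.
- by case => [|[] p] //=; [apply: Hr1|apply: Hl1].
- case => [|b p] [|b' q] //= Hp Hq [Eb E]; subst b'; case: b Hp Hq E => Hp Hq E; congr (_ :: _).
    by apply: Hr2.
  by apply: Hl2.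
- case => [|b p] d.
    case: d => /= H; split.
    + by move=> /Hr0 ->.
    + by move=> _; exists (gr [::]).
    + by move=> /Hl0 ->.
    + by move=> _; exists (gl [::]).
  rewrite rcons_cons; case: b => /= H; split.
  + by move=> E; rewrite (proj1 (Hr3 _ _ H) E).
  + by move=> E; have [s ->] := proj2 (Hr3 _ _ H) E; exists s.
  + by move=> E; rewrite (proj1 (Hl3 _ _ H) E).
  + by move=> E; have [s ->] := proj2 (Hl3 _ _ H) E; exists s.
Qed.

Lemma occ_of_pos (m : btree -> bool) T s : bpos T s -> m (bsubt T s) -> occF m T.
Proof.
elim: T s => [|tl IHl tr IHr] [|[] s] //= Hp Hm; rewrite ?Hm //.
- by rewrite (IHr s Hp Hm) !orbT.
- by rewrite (IHl s Hp Hm) orbT.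
Qed.

Lemma emb_child e l r T f (d : bool) :
  emb (PNode e l r) T f -> emb (if d then r else l) T (fun q => f (d :: q)).
Proof.
case=> H1 H2 H3; split.
- by move=> p Hp; apply: H1; case: d Hp.
- move=> p0 q0 Hp Hq E.
  have := H2 (d :: p0) (d :: q0); case: d Hp Hq E => Hp Hq E H; by case: (H Hp Hq E).
- move=> p d' Hp; have := H3 (d :: p) d'; rewrite rcons_cons; case: d Hp => Hp; exact.
Qed.

Lemma child_mat c T g x tl tr (d : bool) :
  (forall f, emb c T f -> mat c (bsubt T (f [::]))) ->
  emb c T g ->
  bsubt T x = BNode tl tr ->
  (ppos c [::] -> (pedge c [::] -> g [::] = rcons x d) /\
                  (~~ pedge c [::] -> exists s, g [::] = x ++ d :: s)) ->
  match c with PLeaf => true | PNode ec _ _ => if ec then mat c (if d then tr else tl)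
     else occF (mat c) (if d then tr else tl) end.
Proof.
move=> IH Hg E He; have IH' := IH _ Hg.
case: Hg => H1 _ _.
case: c IH IH' H1 He => [|ec cl cr] // IH IH' H1 He.
have [E1 E2] := He erefl.
case: ec IH IH' H1 He E1 E2 => IH IH' H1 He E1 E2.
  by move: IH'; rewrite E1 //= -cats1 bsubt_cat E; case: (d).
have [s Es] := E2 erefl.
move: IH' (H1 [::] erefl); rewrite Es !bsubt_cat E => IH' Hp.
apply: (occ_of_pos (s := s)); last by case: (d) IH' Hp.
by rewrite bpos_bsubt bsubt_cat E -bpos_bsubt in Hp; case: (d) Hp.
Qed.

Lemma emb_mat P T f : emb P T f -> mat P (bsubt T (f [::])).
Proof.
elim: P T f => [|e l IHl r IHr] T f //= Hemb.
have Hemb' := Hemb; case: Hemb' => H1 H2 H3.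
have := H1 [::] erefl; rewrite bpos_bsubt.
case E: (bsubt T (f [::])) => [|tl tr] // _.
apply/andP; split.
  apply: (child_mat (d := false) (IHl T) (emb_child false Hemb) E).
  by move=> Hp; apply: (H3 [::] false).
apply: (child_mat (d := true) (IHr T) (emb_child true Hemb) E).
by move=> Hp; apply: (H3 [::] true).
Qed.

Lemma contains_occ P T : contains P T <-> occ P T.
Proof.
split.
  case=> f Hf; case: P Hf => [|e l r] Hf; first by case: (T).
  apply: (occ_of_pos (s := f [::])); last exact: emb_mat Hf.
  by case: Hf => H1 _ _; apply: H1.
case: P => [|e l r].
  move=> _; exists id; split => p; rewrite ?ppos_leaf //.
  by move=> d; rewrite ppos_leaf.
move/occ_emb => []; last by move=> f Hf; exists f.
by move=> t /mat_emb [f [Hf _]]; exists f.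
Qed.

Fixpoint beq (t u : btree) : bool :=
  match t, u with
  | BLeaf, BLeaf => true
  | BNode a b, BNode c d => beq a c && beq b d
  | _, _ => false
  end.

Lemma beqP : Equality.axiom beq.
Proof.
elim=> [|a IHa b IHb] [|c d] /=; try by constructor.
apply: (iffP andP) => [[/IHa -> /IHb ->] //|[<- <-]].
by split; [apply/IHa|apply/IHb].
Qed.

HB.instance Definition _ := hasDecEq.Build btree beqP.

Fixpoint height (t : btree) : nat :=
  if t is BNode l r then (maxn (height l) (height r)).+1 else 0.

Lemma height_size t : height t <= bsize t.
Proof. elim: t => [|l IHl r IHr] //=; rewrite ltnS geq_max; lia. Qed.

Definition bn (lr : btree * btree) := BNode lr.1 lr.2.

Lemma upto_S h : trees_upto h.+1 = BLeaf :: [seq bn lr | lr <- [seq (l, r) | l <- trees_upto h, r <- trees_upto h]].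
Proof. by []. Qed.

Lemma bn_inj : injective bn.
Proof. by move=> [a b] [c d] [-> ->]. Qed.

Lemma mem_upto h t : (t \in trees_upto h) = (height t <= h).
Proof.
elim: h t => [|h IH] t; first by case: t.
case: t => [|l r]; rewrite upto_S // in_cons /= -[BNode l r]/(bn (l, r)) (mem_map bn_inj) ltnS geq_max -!IH.
apply/allpairsP/andP => [[[x y] [/= Hx Hy [-> ->]]] //|[Hl Hr]].
by exists (l, r).
Qed.

Lemma uniq_upto h : uniq (trees_upto h).
Proof.
elim: h => [|h IH] //; rewrite upto_S /= (map_inj_uniq bn_inj) andbC.
rewrite allpairs_uniq // ?andbT; last by move=> [a b] [c d] _ _ [-> ->].
by apply/mapP => -[[x y] _].
Qed.

Definition cnt (x : pred btree) n := count (fun t => (bsize t == n) && x t) (trees_upto n).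

Lemma cnt_any h x n : n <= h -> count (fun t => (bsize t == n) && x t) (trees_upto h) = cnt x n.
Proof.
move=> Hn; rewrite /cnt -!size_filter; apply: perm_size.
apply: uniq_perm; rewrite ?filter_uniq ?uniq_upto // => t.
rewrite !mem_filter !mem_upto.
case: (boolP (bsize t == n)) => //= /eqP Ht; case: (x t) => //=.
have := height_size t; lia.
Qed.

Lemma eq_cnt x y n : (forall t, x t = y t) -> cnt x n = cnt y n.
Proof. by move=> H; apply: eq_count => t; rewrite H. Qed.

Lemma cnt0 x : cnt x 0 = x BLeaf.
Proof. by rewrite /cnt /=; case: (x BLeaf). Qed.

Lemma count_allpairs (p : pred (btree * btree)) s t :
  count p [seq (x, y) | x <- s, y <- t] = \sum_(x <- s) count (fun y => p (x, y)) t.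
Proof.
elim: s => [|x s IH]; first by rewrite big_nil.
by rewrite allpairs_cons count_cat count_map IH big_cons.
Qed.

Lemma sum_count (q : pred btree) s : \sum_(x <- s) (q x : nat) = count q s.
Proof. by elim: s => [|x s IH]; rewrite ?big_nil ?big_cons ?IH. Qed.

Definition Bn (x y : pred btree) : pred btree :=
  fun t => if t is BNode l r then x l && y r else false.

Lemma cnt_split x y n :
  cnt (Bn x y) n.+1 = \sum_(i < n.+1) cnt x i * cnt y (n - i).
Proof.
rewrite /cnt upto_S /= count_map count_allpairs.
set s := trees_upto n.
transitivity (\sum_(l <- s) \sum_(i < n.+1) ((bsize l == i) && x l) * count (fun r => (bsize r == n - i) && y r) s).
  apply: eq_bigr => l _.
  case: (ltnP n (bsize l)) => Hl.
    rewrite big1; last by move=> [i Hi] _ /=; have -> : (bsize l == i) = false by lia.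
    apply/eqP; rewrite -leqn0 leqNgt -has_count; apply/hasP => -[r _] /=.
    rewrite /bn /=; lia.
  rewrite (bigD1 (Ordinal (n:=n.+1) (m:=bsize l) (Hl : bsize l < n.+1))) //= eqxx /=.
  rewrite big1 ?addn0; last first.
    by move=> [i Hi] /= Hne; case: (bsize l =P i) => [E|//]; move: Hne; rewrite -val_eqE /= E eqxx.
  case: (x l); last by rewrite mul0n; apply/eqP; rewrite -leqn0 leqNgt -has_count; apply/hasP => -[r _] /=; rewrite /bn /= andbF.
  rewrite mul1n; apply: eq_count => r /=; rewrite /bn /=.
  by case: (y r); rewrite ?andbT ?andbF //; apply/eqP/eqP; lia.
rewrite exchange_big /=; apply: eq_bigr => -[i Hi] _ /=.
rewrite -big_distrl /= sum_count !cnt_any //; lia.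
Qed.

Lemma count_and_not (a b : pred btree) s :
  count (fun t => a t && ~~ b t) s + count (fun t => a t && b t) s = count a s.
Proof. elim: s => [|t s IH] //=; rewrite -IH; case: (a t); case: (b t) => /=; lia. Qed.

Lemma cnt_and_not a b n : cnt (fun t => a t && ~~ b t) n + cnt (fun t => a t && b t) n = cnt a n.
Proof.
rewrite /cnt -(count_and_not (fun t => (bsize t == n) && a t) b).
by congr (_ + _); apply: eq_count => t; rewrite andbA.
Qed.

Lemma cnt_split_neg x y u v n :
  cnt (fun t => if t is BNode l r then x l && y r && ~~ (u l && v r) else false) n.+1 +
  \sum_(i < n.+1) cnt (fun t => x t && u t) i * cnt (fun t => y t && v t) (n - i) =
  \sum_(i < n.+1) cnt x i * cnt y (n - i).
Proof.
rewrite -!cnt_split -(cnt_and_not (Bn x y) (Bn u v)).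
congr (_ + _); apply: eq_cnt => -[|l r] //=.
by case: (x l); case: (y r); case: (u l); case: (v r).
Qed.

Section PolyPart.
Local Open Scope ring_scope.
Import GRing.Theory.


Definition pl N (s : nat -> int) : {poly int} := \poly_(i < N) s i.
Definition small N (q : {poly int}) := forall k, (k < N)%N -> q`_k = 0.
Definition conv (s t : nat -> int) m := \sum_(i < m.+1) s i * t (m - i)%N.

Lemma small_sub N p q : small N p -> small N q -> small N (p - q).
Proof. by move=> Hp Hq k Hk; rewrite coefB Hp ?Hq ?subr0. Qed.

Lemma small_mul N q e : small N e -> small N (q * e).
Proof.
move=> He k Hk; rewrite coefM big1 // => i _; rewrite He ?mulr0 //.
by apply: leq_ltn_trans Hk; apply: leq_subr.
Qed.

Lemma coef_plM N s t m : (m < N)%N -> (pl N s * pl N t)`_m = conv s t m.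
Proof.
move=> Hm; rewrite coefM /conv; apply: eq_bigr => -[i Hi] _ /=.
rewrite !coef_poly ifT; last by lia.
by rewrite ifT //; lia.
Qed.

Lemma coef_plm1 N s i : (i < N)%N -> (pl N s - 1)`_i = s i - (i == 0%N)%:R.
Proof. by move=> Hi; rewrite coefB coef_poly Hi coefC; case: (i == 0%N). Qed.

Lemma coef_plm1M N s t m : (m < N)%N ->
  ((pl N s - 1) * pl N t)`_m = conv (fun i => s i - (i == 0%N)%:R) t m.
Proof.
move=> Hm; rewrite coefM /conv; apply: eq_bigr => -[i Hi] _ /=.
rewrite coef_plm1; last by lia.
by rewrite coef_poly ifT //; lia.
Qed.

Definition Dpoly N (a p : nat -> int) : {poly int} :=
  let A := pl N a in let Pp := pl N p in
  A - 1 + 'X * ((A - 1) * Pp) - 'X * (A * A) - 'X * ('X * (Pp * A)).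

Lemma from132 (a p B : nat -> int) N :
  a 0%N = 1 -> (forall m, a m.+1 = conv a a m - conv p B m) ->
  B 0%N = 0 -> (forall m, B m.+1 = a m.+1 - a m) -> small N (Dpoly N a p).
Proof.
move=> a0 Ha B0 HB.
have e1 : small N (pl N a - (1 + 'X * (pl N a * pl N a - pl N p * pl N B))).
  move=> [|m] Hm; rewrite coefB coefD coefC coefXM /=.
    by rewrite coef_poly Hm a0 addr0 subrr.
  by rewrite add0r coefB !coef_plM; [rewrite coef_poly Hm Ha subrr| lia| lia].
have e2 : small N (pl N B - (pl N a - 1 - 'X * pl N a)).
  move=> [|m] Hm; rewrite coefB !coefB coefC coefXM /= !coef_poly Hm.
    by rewrite B0 a0; lia.
  by rewrite ifT; [rewrite HB; lia | lia].
have -> : Dpoly N a p = (pl N a - (1 + 'X * (pl N a * pl N a - pl N p * pl N B)))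
   - ('X * pl N p) * (pl N B - (pl N a - 1 - 'X * pl N a)).
  rewrite /Dpoly; ring.
exact: small_sub e1 (small_mul _ e2).
Qed.

Lemma from213 (a p g : nat -> int) N :
  a 0%N = 1 -> (forall m, a m.+1 = conv a a m - conv (fun i => a i - (i == 0%N)%:R) g m) ->
  g 0%N = 0 -> (forall m, g m.+1 = conv p a m - conv p g m) -> small N (Dpoly N a p).
Proof.
move=> a0 Ha g0 Hg.
have e1 : small N (pl N a - (1 + 'X * (pl N a * pl N a - (pl N a - 1) * pl N g))).
  move=> [|m] Hm; rewrite coefB coefD coefC coefXM /=.
    by rewrite coef_poly Hm a0 addr0 subrr.
  by rewrite add0r coefB coef_plM ?coef_plm1M; [rewrite coef_poly Hm Ha subrr| lia| lia].
have e2 : small N (pl N g - 'X * (pl N p * pl N a - pl N p * pl N g)).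
  move=> [|m] Hm; rewrite coefB coefXM /=.
    by rewrite coef_poly Hm g0 subr0.
  by rewrite coefB !coef_plM; [rewrite coef_poly Hm Hg subrr| lia| lia].
have -> : Dpoly N a p = (1 + 'X * pl N p) * (pl N a - (1 + 'X * (pl N a * pl N a - (pl N a - 1) * pl N g)))
     - ('X * (pl N a - 1)) * (pl N g - 'X * (pl N p * pl N a - pl N p * pl N g)).
  rewrite /Dpoly; ring.
exact: small_sub (small_mul _ e1) (small_mul _ e2).
Qed.

Lemma coefD1 (a p : nat -> int) n :
  (Dpoly n.+2 a p)`_n.+1 = a n.+1 + conv (fun i => a i - (i == 0%N)%:R) p n - conv a a n
     - (if n is m.+1 then conv p a m else 0).
Proof.
rewrite /Dpoly !coefB coefD coefB coef1 /= !coefXM /= coef_plm1M // coef_plM // coef_poly ltnSn subr0.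
case: n => [|m] //=; rewrite coef_plM //; lia.
Qed.

Lemma uniq_sol (a a' c : nat -> int) :
  a 0%N = 1 -> a' 0%N = 1 ->
  (forall N, small N (Dpoly N a (fun i => a i - c i))) ->
  (forall N, small N (Dpoly N a' (fun i => a' i - c i))) ->
  forall n, a n = a' n.
Proof.
move=> a0 a'0 Ha Ha' n.
suff : forall k, (k <= n)%N -> a k = a' k by apply.
elim: n => [|n IH] k Hk.
  have Hk0 : k = 0%N by lia.
  by rewrite Hk0 a0 a'0.
case: (leqP k n) => Hkn; first exact: IH.
have -> : k = n.+1 by lia.
have E := Ha n.+2 n.+1 (ltnSn _); have E' := Ha' n.+2 n.+1 (ltnSn _).
rewrite coefD1 in E; rewrite coefD1 in E'.
have S1 : conv (fun i => a i - (i == 0%N)%:R) (fun i => a i - c i) n =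
          conv (fun i => a' i - (i == 0%N)%:R) (fun i => a' i - c i) n.
  apply: eq_bigr => -[i Hi] _ /=; rewrite !IH //; lia.
have S2 : conv a a n = conv a' a' n.
  apply: eq_bigr => -[i Hi] _ /=; rewrite !IH //; lia.
have S3 : (if n is m.+1 then conv (fun i => a i - c i) a m else 0) =
          (if n is m.+1 then conv (fun i => a' i - c i) a' m else 0).
  case: n IH {E E' S1 S2 Hk Hkn} => [|m] IH //.
  apply: eq_bigr => -[i Hi] _ /=; rewrite !IH //; lia.
rewrite S1 S2 S3 in E.
have {}E := etrans E (esym E'). apply: (addIr (conv (fun i => a' i - (i == 0%N)%:R) (fun i => a' i - c i) n)). apply: (addIr (- conv a' a' n)). exact: (addIr _ E).
Qed.

End PolyPart.

Section CountPart.
Local Open Scope ring_scope.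

Lemma eq_occF (m1 m2 : btree -> bool) : m1 =1 m2 -> occF m1 =1 occF m2.
Proof. by move=> H; elim=> [|a IHa b IHb] /=; rewrite H ?IHa ?IHb. Qed.

Lemma eq_cnt_S (x y : pred btree) n :
  (forall l r, x (BNode l r) = y (BNode l r)) -> cnt x n.+1 = cnt y n.+1.
Proof. by move=> H; apply: eq_count => -[|l r] //=; rewrite H. Qed.

Lemma cnt_false (x : pred btree) n : (forall l r, x (BNode l r) = false) -> cnt x n.+1 = 0%N.
Proof.
move=> H; rewrite /cnt (eq_count (a2 := pred0)) ?count_pred0 // => -[|l r] //=.
by rewrite H andbF.
Qed.

Lemma conv_nat (f g : nat -> nat) n :
  conv (fun i => (f i)%:Z) (fun i => (g i)%:Z) n = (\sum_(i < n.+1) f i * g (n - i))%N%:Z.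
Proof.
rewrite /conv (big_morph Posz PoszD (erefl _)); apply: eq_bigr => i _; by rewrite PoszM.
Qed.

Section Main.
Variables (e : bool) (l r : ptree).
Local Notation P := (PNode e l r).

Local Notation occP := (occ (PNode e l r)).
Definition av1 t := ~~ occ (Q132 P) t.
Definition av2 t := ~~ occ (Q213 P) t.
Definition lne t := if t is BNode l _ then isnode l else false.
Definition lC t := if t is BNode l _ then occP l else false.

Lemma occP_leaf : occP BLeaf = false.
Proof. by []. Qed.

Lemma occ_nc : occF (mat (PNode false l r)) =1 occP.
Proof. by apply: eq_occF => -[|a b]. Qed.

Lemma occ_node Q L R : occ Q (BNode L R) = mat Q (BNode L R) || (occ Q L || occ Q R).
Proof. by []. Qed.

Lemma mat_Q132 L R : mat (Q132 P) (BNode L R) = occP L && lne R.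
Proof. by case: R => [|[|? ?] ?] /=; rewrite ?andbF ?andbT. Qed.

Lemma mat_Q213 L R : mat (Q213 P) (BNode L R) = isnode L && lC R.
Proof. by case: R => [|? ?]; case: L => [|? ?] /=; rewrite ?andbF ?andbT. Qed.

Lemma av1_node L R : av1 (BNode L R) = av1 L && av1 R && ~~ (occP L && lne R).
Proof.
rewrite /av1 occ_node mat_Q132.
by case: (occP L && lne R); case: (occ _ L); case: (occ _ R).
Qed.

Lemma av2_node L R : av2 (BNode L R) = av2 L && av2 R && ~~ (isnode L && lC R).
Proof.
rewrite /av2 occ_node mat_Q213.
by case: (isnode L && lC R); case: (occ _ L); case: (occ _ R).
Qed.

Lemma occQ1_P t : occ (Q132 P) t -> occP t.
Proof.
elim: t => [|L IHL R IHR] //.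
rewrite occ_node mat_Q132 occ_node.
case/orP => [/andP [H _]|/orP [/IHL H|/IHR H]]; by rewrite H ?orbT.
Qed.

Lemma occQ2_P t : occ (Q213 P) t -> occP t.
Proof.
elim: t => [|L IHL R IHR] //.
rewrite occ_node mat_Q213 occ_node.
case/orP => [/andP [_]|/orP [/IHL H|/IHR H]]; rewrite ?H ?orbT //.
case: R {IHR} => [|RL RR] // H.
have H' : occP RL := H.
by rewrite [occ _ (BNode RL RR)]occ_node H' !orbT.
Qed.

Definition cc n := (cnt (fun t => ~~ occP t) n)%:Z.
Definition a1 n := (cnt av1 n)%:Z.
Definition a2 n := (cnt av2 n)%:Z.
Definition B1 n := (cnt (fun t => av1 t && lne t) n)%:Z.
Definition g2 n := (cnt (fun t => av2 t && lC t) n)%:Z.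

Lemma p1E i : (cnt (fun t => av1 t && occP t) i)%:Z = a1 i - cc i.
Proof.
have H := cnt_and_not av1 occP i.
have E : cnt (fun t => av1 t && ~~ occP t) i = cnt (fun t => ~~ occP t) i.
  apply: eq_cnt => t; case: (boolP (occP t)) => Ht; rewrite ?andbF ?andbT //.
  by apply/negP => /occQ1_P; apply/negP.
rewrite /a1 /cc -H E PoszD; ring.
Qed.

Lemma p2E i : (cnt (fun t => av2 t && occP t) i)%:Z = a2 i - cc i.
Proof.
have H := cnt_and_not av2 occP i.
have E : cnt (fun t => av2 t && ~~ occP t) i = cnt (fun t => ~~ occP t) i.
  apply: eq_cnt => t; case: (boolP (occP t)) => Ht; rewrite ?andbF ?andbT //.
  by apply/negP => /occQ2_P; apply/negP.
rewrite /a2 /cc -H E PoszD; ring.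
Qed.

Lemma a1_0 : a1 0 = 1. Proof. by rewrite /a1 cnt0. Qed.
Lemma a2_0 : a2 0 = 1. Proof. by rewrite /a2 cnt0. Qed.

Lemma a1_rec m : a1 m.+1 = conv a1 a1 m - conv (fun i => a1 i - cc i) B1 m.
Proof.
have H := cnt_split_neg av1 av1 occP lne m.
have -> : conv (fun i => a1 i - cc i) B1 m =
   conv (fun i => (cnt (fun t => av1 t && occP t) i)%:Z) B1 m.
  by apply: eq_bigr => i _; rewrite p1E.
rewrite /a1 /B1 !conv_nat -H (eq_cnt_S (y := fun t => if t is BNode l r then
   av1 l && av1 r && ~~ (occP l && lne r) else false)); last by move=> ? ?; rewrite av1_node.
by rewrite PoszD addrK.
Qed.

Lemma B1_0 : B1 0 = 0. Proof. by rewrite /B1 cnt0. Qed.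

Lemma B1_rec m : B1 m.+1 = a1 m.+1 - a1 m.
Proof.
have H := cnt_and_not av1 lne m.+1.
have E : cnt (fun t => av1 t && ~~ lne t) m.+1 = cnt av1 m.
  rewrite (eq_cnt_S (y := Bn (fun t => ~~ isnode t) av1)); last first.
    move=> L R; rewrite av1_node /Bn /lne; case: L => [|? ?]; rewrite /= ?andbF ?andbT //.
  rewrite cnt_split big_ord_recl cnt0 /= mul1n subn0 big1 ?addn0 // => i _.
  by rewrite cnt_false.
rewrite /a1 /B1 -H E PoszD; ring.
Qed.

Lemma notnode_cnt i : cnt (fun t => av2 t && ~~ isnode t) i = (i == 0%N).
Proof. by case: i => [|i]; [rewrite cnt0 | rewrite cnt_false // => ? ?; rewrite andbF]. Qed.

Lemma a2_rec m : a2 m.+1 = conv a2 a2 m - conv (fun i => a2 i - (i == 0%N)%:R) g2 m.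
Proof.
have H := cnt_split_neg av2 av2 isnode lC m.
have -> : conv (fun i => a2 i - (i == 0%N)%:R) g2 m =
   conv (fun i => (cnt (fun t => av2 t && isnode t) i)%:Z) g2 m.
  apply: eq_bigr => i _; congr (_ * _).
  have := cnt_and_not av2 isnode i; rewrite notnode_cnt /a2 => <-.
  by rewrite PoszD; case: (_ == _) => /=; lia.
rewrite /a2 /g2 !conv_nat -H (eq_cnt_S (y := fun t => if t is BNode l r then
   av2 l && av2 r && ~~ (isnode l && lC r) else false)); last by move=> ? ?; rewrite av2_node.
by rewrite PoszD addrK.
Qed.

Lemma g2_0 : g2 0 = 0. Proof. by rewrite /g2 cnt0 andbF. Qed.

Lemma g2_rec m : g2 m.+1 = conv (fun i => a2 i - cc i) a2 m - conv (fun i => a2 i - cc i) g2 m.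
Proof.
have H := cnt_split_neg (fun t => av2 t && occP t) av2 (fun _ => true) lC m.
have E1 : conv (fun i => a2 i - cc i) a2 m =
   conv (fun i => (cnt (fun t => av2 t && occP t) i)%:Z) a2 m.
  by apply: eq_bigr => i _; rewrite p2E.
have E2 : conv (fun i => a2 i - cc i) g2 m =
   conv (fun i => (cnt (fun t => av2 t && occP t && true) i)%:Z) g2 m.
  by apply: eq_bigr => i _; rewrite (eq_cnt _ (y := fun t => av2 t && occP t)) ?p2E // => t; rewrite andbT.
rewrite E1 E2 /a2 /g2 !conv_nat -H.
rewrite (eq_cnt_S (x := fun t => av2 t && lC t) (y := fun t => if t is BNode l r then
   av2 l && occP l && av2 r && ~~ (true && lC r) else false)); last first.
  move=> L R; rewrite av2_node; change (lC (BNode L R)) with (occP L).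
  case: L => [|L1 L2]; first by rewrite occP_leaf !andbF.
  change (isnode (BNode L1 L2)) with true.
  by case: (av2 _); case: (av2 R); case: (lC R); case: (occP _).
by rewrite PoszD addrK.
Qed.

Lemma a12 n : a1 n = a2 n.
Proof.
apply: (uniq_sol (c := cc) a1_0 a2_0) => N.
  exact: from132 a1_0 a1_rec B1_0 B1_rec.
exact: from213 a2_0 a2_rec g2_0 g2_rec.
Qed.
End Main.

End CountPart.

Lemma num_avE Q n : num_avoiders Q n = cnt (fun t => ~~ occ Q t) n.
Proof.
apply: eq_cnt => t.
by apply/asboolP/negP => H1 H2; apply: H1; apply/contains_occ.
Qed.

Theorem lemma19 (P : ptree) : P <> PLeaf -> wilf_equiv (Q132 P) (Q213 P).
Proof.
case: P => [//|e l r] _ n.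
rewrite !num_avE.
have := a12 e l r n; rewrite /a1 /a2 => /eqP; rewrite eqz_nat => /eqP.
by [].
Qed.
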